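(* Let $\mathcal{T}$ be a trim transducer. If $[\![\mathcal{T}]\!]$ is multi-sequential, then $\mathcal{T}$ satisfies the weak twinning property.
   Context: A transducer is a tuple $\mathcal{T}=(Q,E,I,F,f)$ with finite state set $Q$, initial states $I$, final states $F$, transitions $E\subseteq Q\times\Sigma\times\Gamma^*\times Q$ and final output function $f:F\to\Gamma^*$. We write $p\xrightarrow{u\mid w}q$ if there is a run from $p$ to $q$ reading $u$ and outputting $w$. $[\![\mathcal{T}]\!]=\{(u,wf(t)) : i\xrightarrow{u\mid w}t,\ i\in I,\ t\in F\}$. $\mathcal{T}$ is trim if every state lies on some run from an initial to a final state. Sequential transducer: single initial state and at most one transition per (state, input letter); sequential function: realised by a sequential transducer; multi-sequential relation: finite union of sequential functions. $\Delta(v,w)=v^{-1}w$ in the free group over $\Gamma$. $\mathcal{T}$ satisfies the weak twinning property if for all states $q_1,q_2$, all $u,v\in\Sigma^*$ and $u_1,u_2,v_1,v_2\in\Gamma^*$ with $q_1\xrightarrow{u\mid u_1}q_1$, $q_1\xrightarrow{v\mid v_1}q_1$, $q_1\xrightarrow{u\mid u_2}q_2$, $q_2\xrightarrow{v\mid v_2}q_2$, one has $\Delta(u_1,u_2)=\Delta(u_1v_1,u_2v_2)$. *)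

(* Defs.v *)
From mathcomp Require Import all_boot.
Set Implicit Arguments. Unset Strict Implicit. Unset Printing Implicit Defensive.

Section Transducers.
Variables (Sigma Gamma : finType).

Record transducer := Transducer {
  state : finType;
  trans : seq (state * Sigma * seq Gamma * state);
  init  : {set state};
  final : {set state};
  fout  : state -> seq Gamma   (* only relevant on final states *)
}.

Inductive run (T : transducer) : state T -> seq Sigma -> seq Gamma -> state T -> Prop :=
| run_nil p : run p [::] [::] p
| run_cons p a w q u w' r :
    (p, a, w, q) \in trans T -> run q u w' r -> run p (a :: u) (w ++ w') r.

Definition sem (T : transducer) (u : seq Sigma) (w : seq Gamma) : Prop :=
  exists i t w0, [/\ i \in init T, t \in final T, run i u w0 t & w = w0 ++ @fout T t].

Definition trim (T : transducer) : Prop :=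
  forall q : state T, exists i t u1 w1 u2 w2,
    [/\ i \in init T, t \in final T, run i u1 w1 q & run q u2 w2 t].

Definition sequential (T : transducer) : Prop :=
  #|init T| = 1 /\
  forall e1 e2, e1 \in trans T -> e2 \in trans T ->
    e1.1.1.1 = e2.1.1.1 -> e1.1.1.2 = e2.1.1.2 -> e1 = e2.

Definition sequential_function (R : seq Sigma -> seq Gamma -> Prop) : Prop :=
  exists T : transducer, sequential T /\ forall u w, R u w <-> sem T u w.

Definition multi_sequential (R : seq Sigma -> seq Gamma -> Prop) : Prop :=
  exists (n : nat) (Rs : 'I_n -> seq Sigma -> seq Gamma -> Prop),
    (forall k, sequential_function (Rs k)) /\
    forall u w, R u w <-> exists k, Rs k u w.

(* Free group over Gamma: elements are freely reduced words over letters
   (a, b) with b = false for a and b = true for a^{-1}. *)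
Definition fletter := (Gamma * bool)%type.

Definition fpush (x : fletter) (s : seq fletter) : seq fletter :=
  match s with
  | y :: r => if (y.1 == x.1) && (y.2 != x.2) then r else x :: s
  | [::] => [:: x]
  end.

Definition freduce (s : seq fletter) : seq fletter := foldr fpush [::] s.

Definition finv (v : seq Gamma) : seq fletter := [seq (a, true) | a <- rev v].
Definition fword (v : seq Gamma) : seq fletter := [seq (a, false) | a <- v].

Definition Delta (v w : seq Gamma) : seq fletter := freduce (finv v ++ fword w).

Definition weak_twinning (T : transducer) : Prop :=
  forall (q1 q2 : state T) (u v : seq Sigma) (u1 u2 v1 v2 : seq Gamma),
    run q1 u u1 q1 -> run q1 v v1 q1 -> run q1 u u2 q2 -> run q2 v v2 q2 ->
    Delta u1 u2 = Delta (u1 ++ v1) (u2 ++ v2).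

End Transducers.

(* Main.v *)
Require Import Defs.
From mathcomp Require Import all_boot zify.
From Stdlib Require ClassicalEpsilon Classical.
Set Implicit Arguments. Unset Strict Implicit. Unset Printing Implicit Defensive.

Section FG.
Variable Gamma : finType.
Implicit Types (s t l r : seq (fletter Gamma)) (x y : fletter Gamma).

Definition cnd x y := (y.1 == x.1) && (y.2 != x.2).
Definition finvl x : fletter Gamma := (x.1, ~~ x.2).

Fixpoint reduced s := match s with
 | x :: ((y :: _) as r) => ~~ cnd x y && reduced r
 | _ => true end.

Lemma cndC x y : cnd x y = cnd y x.
Proof. case: x y => a b [c d]; rewrite /cnd /= eq_sym; by case: b; case: d. Qed.

Lemma cnd_inv x y : cnd x y -> y = finvl x.
Proof. case: x y => a b [c d]; rewrite /cnd /finvl /=; case/andP => /eqP -> .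
by case: b; case: d. Qed.

Lemma cnd_finvl x : cnd x (finvl x).
Proof. case: x => a b; rewrite /cnd /finvl /= eqxx; by case: b. Qed.

Lemma finvlK x : finvl (finvl x) = x.
Proof. case: x => a b; by rewrite /finvl /= negbK. Qed.

Lemma reduced_tail x s : reduced (x :: s) -> reduced s.
Proof. case: s => //= y r; by case/andP. Qed.

Lemma fpush_red x t : reduced t -> reduced (fpush x t).
Proof.
case: t => //= y r Hr.
case: ifP => H; first exact: reduced_tail Hr.
rewrite /= /cnd H /=. exact: Hr.
Qed.

Lemma freduce_red s : reduced (freduce s).
Proof. elim: s => //= x s IH; exact: fpush_red. Qed.

Lemma foldr_red t l : reduced t -> reduced (foldr (@fpush _) t l).
Proof. move=> Ht; elim: l => //= x l IH; exact: fpush_red. Qed.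

Lemma fpush_cancel x t : reduced t -> fpush x (fpush (finvl x) t) = t.
Proof.
case: t => [|y r] /=.
  move=> _. rewrite /= eqxx /=. case: x => a b /=. by case: b.
move=> Hr.
case: ifP => H.
  have Hy : y = x.
    move: H; case: x y {Hr} => a b [c d] /= /andP [/eqP -> ]; by case: b; case: d.
  subst y. move: Hr; case: r => //= z r' /andP [Hn _].
  by move: Hn; rewrite /cnd => /negbTE ->.
rewrite /= eqxx /=. case: x {H} => a b /=. by case: b.
Qed.

Lemma fpush_foldr t x r : reduced t ->
  foldr (@fpush _) t (fpush x r) = fpush x (foldr (@fpush _) t r).
Proof.
move=> Ht; case: r => [|y r] //=.
case: ifP => H //.
have Hy : y = finvl x.
  move: H; case: x y => a b [c d] /= /andP [/eqP -> ]; rewrite /finvl /=; by case: b; case: d.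
subst y. by rewrite fpush_cancel // foldr_red.
Qed.

Lemma foldr_freduce t l : reduced t ->
  foldr (@fpush _) t l = foldr (@fpush _) t (freduce l).
Proof.
move=> Ht; elim: l => //= x l IH. by rewrite IH fpush_foldr.
Qed.

Lemma freduce_cat l r : freduce (l ++ r) = foldr (@fpush _) (freduce r) l.
Proof. by rewrite /freduce foldr_cat. Qed.

Lemma freduce_id s : reduced s -> freduce s = s.
Proof.
elim: s => //= x s IH Hs.
rewrite IH; last exact: reduced_tail Hs.
move: Hs; case: s {IH} => //= y r /andP [Hn _].
by move: Hn; rewrite /cnd => /negbTE ->.
Qed.

Lemma freduceL l r : freduce (freduce l ++ r) = freduce (l ++ r) :> seq (fletter Gamma).
Proof. by rewrite !freduce_cat -foldr_freduce // (@freduce_red r). Qed.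

Lemma freduceR l r : freduce (l ++ freduce r) = freduce (l ++ r).
Proof. by rewrite !freduce_cat freduce_id // freduce_red. Qed.

Lemma freduceM (a b c : seq (fletter Gamma)) : freduce (a ++ freduce b ++ c) = freduce (a ++ b ++ c).
Proof. by rewrite -freduceR freduceL freduceR. Qed.

Lemma finv_cons a (e : seq Gamma) : Defs.finv (a :: e) = Defs.finv e ++ [:: (a, true)].
Proof. by rewrite /Defs.finv rev_cons map_rcons cats1. Qed.

Lemma finv_cat (a b : seq Gamma) : Defs.finv (a ++ b) = Defs.finv b ++ Defs.finv a.
Proof. by rewrite /Defs.finv rev_cat map_cat. Qed.

Lemma fword_cat (a b : seq Gamma) : fword (a ++ b) = fword a ++ fword b.
Proof. by rewrite /fword map_cat. Qed.

Lemma cancel1 (e : seq Gamma) b : freduce (fword e ++ Defs.finv e ++ b) = freduce b.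
Proof.
elim: e b => //= a e IH b.
rewrite finv_cons -catA /=. rewrite IH /=.
have := @fpush_cancel (a, false) (freduce b) (freduce_red _). by [].
Qed.

Lemma cancel2 (e : seq Gamma) b : freduce (Defs.finv e ++ fword e ++ b) = freduce b.
Proof.
elim: e b => //= a e IH b.
rewrite finv_cons -catA /= freduce_cat /=.
have -> : fpush (a, true) (fpush (a, false) (freduce (fword e ++ b))) = freduce (fword e ++ b).
  have := @fpush_cancel (a, true) (freduce (fword e ++ b)) (freduce_red _). by [].
by rewrite -freduce_cat IH.
Qed.

Lemma cancelM1 a (e : seq Gamma) b : freduce (a ++ fword e ++ Defs.finv e ++ b) = freduce (a ++ b).
Proof. by rewrite -freduceR cancel1 freduceR. Qed.

Lemma cancelM2 a (e : seq Gamma) b : freduce (a ++ Defs.finv e ++ fword e ++ b) = freduce (a ++ b).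
Proof. by rewrite -freduceR cancel2 freduceR. Qed.

Lemma Delta_lcancel (a X Y : seq Gamma) : Delta (a ++ X) (a ++ Y) = Delta X Y.
Proof.
rewrite /Delta finv_cat fword_cat -catA.
by have := cancelM2 (Defs.finv X) a (fword Y).
Qed.

Lemma Delta_rcancel_eq (X Y e g : seq Gamma) :
  Delta X Y = freduce (fword e ++ Delta (X ++ e) (Y ++ g) ++ Defs.finv g).
Proof.
rewrite /Delta freduceM finv_cat fword_cat -!catA.
rewrite -[fword e ++ _]cat0s cancelM1 /=.
have := cancelM1 (Defs.finv X ++ fword Y) g [::]. rewrite !cats0 -!catA. by move=> ->.
Qed.

Lemma Delta_rcancel (X Y X' Y' e g : seq Gamma) :
  Delta (X ++ e) (Y ++ g) = Delta (X' ++ e) (Y' ++ g) -> Delta X Y = Delta X' Y'.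
Proof. by move=> H; rewrite (Delta_rcancel_eq X Y e g) (Delta_rcancel_eq X' Y' e g) H. Qed.

End FG.

Section DL.
Variable Gamma : finType.

Fixpoint dl (a b : seq Gamma) : seq Gamma * seq Gamma :=
  match a, b with
  | x :: a', y :: b' => if x == y then dl a' b' else (a, b)
  | _, _ => (a, b) end.

Lemma dl_prefix a b : exists s, a = s ++ (dl a b).1 /\ b = s ++ (dl a b).2.
Proof.
elim: a b => [|x a IH] [|y b] /=; try by exists [::].
case: eqP => [<-|_]; last by exists [::].
have [s [H1 H2]] := IH b. exists (x :: s). by rewrite /= -H1 -H2.
Qed.

Definition headok (p : seq Gamma * seq Gamma) :=
  match p with (x :: _, y :: _) => x != y | _ => true end.

Lemma dl_head a b : headok (dl a b).
Proof.
elim: a b => [|x a IH] [|y b] //=.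
case: eqP => [_|/eqP]; first exact: IH. by [].
Qed.

Lemma freduce_fword (Q : seq Gamma) : freduce (fword Q) = fword Q.
Proof.
elim: Q => //= q Q ->. case: Q => //= q2 Q2. by rewrite andbF.
Qed.

Lemma foldr_true (l : seq Gamma) p t :
  foldr (@fpush _) ((p, true) :: t) [seq (a, true) | a <- l] =
  [seq (a, true) | a <- l] ++ (p, true) :: t.
Proof.
elim: l => //= a l ->. by case: l => [|? ?] /=; rewrite andbF.
Qed.

Lemma Delta_nohead P Q : headok (P, Q) -> Delta P Q = Defs.finv P ++ fword Q.
Proof.
rewrite /Delta freduce_cat freduce_fword.
case: P => [|p P] H; first by [].
rewrite finv_cons foldr_cat /=.
have -> : fpush (p, true) (fword Q) = (p, true) :: fword Q.
  move: H; case: Q => //= q Q /= H. by rewrite andbT eq_sym (negbTE H).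
by rewrite /Defs.finv foldr_true -catA.
Qed.

Lemma Delta_dl a b : Delta a b = Defs.finv (dl a b).1 ++ fword (dl a b).2.
Proof.
have [s [H1 H2]] := dl_prefix a b.
move: H1 H2 (dl_head a b); case: (dl a b) => P Q /= -> -> Hh.
by rewrite Delta_lcancel Delta_nohead.
Qed.

Lemma pair_inj (P Q P' Q' : seq Gamma) :
  Defs.finv P ++ fword Q = Defs.finv P' ++ fword Q' -> P = P' /\ Q = Q'.
Proof.
move=> H.
have H1 := congr1 (fun s => map fst (filter (fun z => z.2) s)) H.
have H2 := congr1 (fun s => map fst (filter (fun z => ~~ z.2) s)) H.
move: H1 H2 => /=; rewrite !filter_cat /Defs.finv /fword !filter_map.
rewrite /preim /=.
rewrite !(eq_filter (a1 := fun _ => true) (a2 := predT)) //.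
rewrite !(eq_filter (a1 := fun _ => false) (a2 := pred0)) //.
rewrite !filter_pred0 !filter_predT !cats0 /= -!map_comp.
rewrite !map_id_in //. by move=> /(congr1 rev); rewrite !revK => -> ->.
Qed.

Lemma Delta_inj a b a' b' : Delta a b = Delta a' b' -> dl a b = dl a' b'.
Proof.
rewrite !Delta_dl => /pair_inj [H1 H2].
by case: (dl a b) H1 H2 => ? ? /= -> ->; case: (dl a' b').
Qed.

End DL.

Definition vpow (T : Type) (n : nat) (v : seq T) : seq T := flatten (nseq n v).

Section Words.
Variable T : Type.
Implicit Types (v w Q s : seq T).

Lemma vpowD m n v : vpow (m + n) v = vpow m v ++ vpow n v.
Proof. by rewrite /vpow nseqD flatten_cat. Qed.

Lemma vpowS n v : vpow n.+1 v = v ++ vpow n v.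
Proof. by []. Qed.

Lemma vpowSr n v : vpow n.+1 v = vpow n v ++ v.
Proof. by rewrite -addn1 vpowD /vpow /= cats0. Qed.

Lemma size_vpow n v : size (vpow n v) = n * size v.
Proof. elim: n => //= n IH. by rewrite size_cat IH mulSn. Qed.

Lemma catlI s a b : s ++ a = s ++ b -> a = b.
Proof. by elim: s => //= x s IH [] /IH. Qed.

Lemma vpowM p m v : vpow (p * m) v = vpow m (vpow p v).
Proof.
elim: m => [|m IH]; first by rewrite muln0.
by rewrite mulnS vpowD IH.
Qed.

Lemma conj_iter p w1 w2 Q : Q ++ vpow p w2 = vpow p w1 ++ Q ->
  forall m, Q ++ vpow (p * m) w2 = vpow (p * m) w1 ++ Q.
Proof.
move=> H m; rewrite !vpowM; elim: m => [|m IH] /=; first by rewrite cats0.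
by rewrite catA H -catA IH catA.
Qed.

Lemma conj_root p w1 w2 Q : 0 < p -> size w1 = size w2 -> 0 < size w1 ->
  Q ++ vpow p w2 = vpow p w1 ++ Q -> Q ++ w2 = w1 ++ Q.
Proof.
move=> Hp Hs Hl H.
set N := p * (size Q).+1.
have HN := conj_iter H (size Q).+1. rewrite -/N in HN.
have NS : N = N.-1.+1 by rewrite prednK // muln_gt0 Hp.
have Hbig : size Q + size w1 <= size (vpow N w1).
  rewrite size_vpow /N. nia.
have E1 : take (size Q + size w1) (Q ++ vpow N w2) = Q ++ w2.
  rewrite take_cat ltnNge leq_addr /= addKn NS vpowS Hs take_size_cat //.
have E2 : take (size Q) (Q ++ vpow N w2) = Q by rewrite take_size_cat.
rewrite HN in E1 E2.
rewrite takel_cat in E1; last by [].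
rewrite takel_cat in E2; last by apply: leq_trans Hbig; rewrite leq_addr.
rewrite -E1 -{2}E2.
have -> : w1 ++ take (size Q) (vpow N w1) = take (size w1 + size Q) (w1 ++ vpow N w1).
  by rewrite take_cat ltnNge leq_addr /= addKn.
by rewrite -vpowS vpowSr takel_cat // addnC.
Qed.

End Words.

Section Final.
Variable Gamma : finType.

Lemma nth_pref (x0 : Gamma) (s s' P R : seq Gamma) : size s < size s' ->
   s' ++ P = s ++ R -> nth x0 s' (size s) = nth x0 R 0.
Proof.
move=> Hlt H. have := congr1 (fun l => nth x0 l (size s)) H => /=.
by rewrite !nth_cat Hlt ltnn subnn.
Qed.

Lemma twin_of_period (u1 u2 v1 v2 : seq Gamma) c c' : c < c' ->
  Delta (u1 ++ vpow c v1) (u2 ++ vpow c v2) =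
  Delta (u1 ++ vpow c' v1) (u2 ++ vpow c' v2) ->
  Delta u1 u2 = Delta (u1 ++ v1) (u2 ++ v2).
Proof.
move=> Hcc HD.
set p := c' - c.
have Hp : 0 < p by rewrite subn_gt0.
have Ec' : c' = c + p by rewrite subnKC // ltnW.
have Hdl := Delta_inj HD.
have [s [Ha Hb]] := dl_prefix (u1 ++ vpow c v1) (u2 ++ vpow c v2).
have [s' [Ha' Hb']] := dl_prefix (u1 ++ vpow c' v1) (u2 ++ vpow c' v2).
have Hh := dl_head (u1 ++ vpow c v1) (u2 ++ vpow c v2).
rewrite -Hdl in Ha' Hb'.
move: Ha Hb Ha' Hb' Hh.
case: (dl (u1 ++ vpow c v1) (u2 ++ vpow c v2)) => P Q /= Ha Hb Ha' Hb' Hh.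
rewrite Ec' vpowD !catA in Ha'. rewrite Ec' vpowD !catA in Hb'.
rewrite Ha in Ha'; rewrite Hb in Hb'.
have Sa := congr1 size Ha'; have Sb := congr1 size Hb'.
rewrite !size_cat !size_vpow in Sa Sb.
have Hl : size v1 = size v2.
  apply/eqP; rewrite -(eqn_pmul2l Hp); apply/eqP.
  move: Sa Sb; set x := size s; set y := size s'; set z := size P; set w := size Q. lia.
have [Hl0|Hlpos] := posnP (size v1).
  move: (Hl0); rewrite Hl => /size0nil -> ; move/size0nil: Hl0 => ->.
  by rewrite !cats0.
have Hss : size s < size s'.
  move: Sa; set x := size s; set y := size s'; set z := size P.
  have : 0 < p * size v1 by rewrite muln_gt0 Hp Hlpos. lia.
have HPQ : P = [::] \/ Q = [::].
  case EP: P => [|p0 P0]; first by left.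
  case EQ: Q => [|q0 Q0]; first by right.
  exfalso. rewrite EP EQ /= in Hh.
  rewrite -catA in Ha'; rewrite -catA in Hb'.
  have E1 := nth_pref p0 Hss (esym Ha'). rewrite EP /= in E1.
  have E2 := nth_pref p0 Hss (esym Hb'). rewrite EQ /= in E2.
  by move: Hh; rewrite -E1 -E2 eqxx.
set Ac := u1 ++ vpow c v1; set Bc := u2 ++ vpow c v2.
have key : Delta (Ac ++ v1) (Bc ++ v2) = Delta Ac Bc.
  case: HPQ => HPQ0; rewrite HPQ0 in Ha Ha' Hb Hb'.
  - rewrite !cats0 in Ha Ha'.
    have HQ : Q ++ vpow p v2 = vpow p v1 ++ Q.
      move: Hb'; rewrite -Ha' -!catA => /catlI. by [].
    have HQ1 := conj_root Hp Hl Hlpos HQ.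
    rewrite /Ac /Bc Ha Hb -catA HQ1 catA.
    by rewrite -{1}(cats0 (s ++ v1)) Delta_lcancel -{1}(cats0 s) Delta_lcancel.
  - rewrite !cats0 in Hb Hb'.
    have HP : P ++ vpow p v1 = vpow p v2 ++ P.
      move: Ha'; rewrite -Hb' -!catA => /catlI. by [].
    have Hlpos2 : 0 < size v2 by rewrite -Hl.
    have HP1 := conj_root Hp (esym Hl) Hlpos2 HP.
    rewrite /Ac /Bc Ha Hb -catA HP1 catA.
    by rewrite -{2}(cats0 (s ++ v2)) Delta_lcancel -{2}(cats0 s) Delta_lcancel.
move: key; rewrite /Ac /Bc -!catA -!vpowSr !vpowS !catA => /Delta_rcancel.
by move=> ->.
Qed.

End Final.

Section Runs.
Variables (Sigma Gamma : finType).
Variable T : transducer Sigma Gamma.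

Lemma run_cat (p q r : state T) a b w w' :
  run p a w q -> run q b w' r -> run p (a ++ b) (w ++ w') r.
Proof.
elim=> [p0|p0 a0 w0 q0 u0 w0' r0 Hin Hr IH] //= H.
rewrite -catA. apply: run_cons Hin _. exact: IH.
Qed.

Lemma run_consE (p r : state T) x a w : run p (x :: a) w r ->
  exists w0 q w', [/\ (p, x, w0, q) \in trans T, run q a w' r & w = w0 ++ w'].
Proof. move=> H; inversion H; subst; do 3 eexists; split; eauto. Qed.

Lemma run_nilE (p r : state T) w : run p [::] w r -> w = [::] /\ r = p.
Proof. move=> H; by inversion H. Qed.

Lemma run_split (p r : state T) a b w :
  run p (a ++ b) w r -> exists w1 w2 m, [/\ run p a w1 m, run m b w2 r & w = w1 ++ w2].
Proof.
elim: a p w => [|x a IH] p w /= H.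
  by exists [::], w, p; split => //; constructor.
have [w0 [q [w' [Hin Hr ->]]]] := run_consE H.
have [w1 [w2 [m [H1 H2 ->]]]] := IH _ _ Hr.
exists (w0 ++ w1), w2, m; split => //; last by rewrite catA.
exact: run_cons Hin H1.
Qed.

Lemma run_vpow (q : state T) v w n : run q v w q -> run q (vpow n v) (vpow n w) q.
Proof.
move=> H; elim: n => [|n IH] /=; first by constructor.
exact: run_cat H IH.
Qed.

Lemma run_det (Hs : sequential T) (p q q' : state T) a w w' :
  run p a w q -> run p a w' q' -> w = w' /\ q = q'.
Proof.
move=> H; elim: H q' w' => [p0|p0 x w0 q0 u0 w0' r0 Hin Hr IH] q' w' H'.
  by have [-> ->] := run_nilE H'.
have [w1 [q1 [w1' [Hin' Hr' ->]]]] := run_consE H'.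
have E := Hs.2 _ _ Hin Hin' erefl erefl.
case: E => E1 E2; subst.
have [-> ->] := IH _ _ Hr'. by [].
Qed.

End Runs.

Lemma pigeon n (Q : 'I_n.+1 -> 'I_n -> Prop) :
  (forall j, exists k, Q j k) -> exists (j j' : 'I_n.+1) k, j < j' /\ Q j k /\ Q j' k.
Proof.
move=> H.
pose f j := sval (ClassicalEpsilon.constructive_indefinite_description _ (H j)).
have Hf j : Q j (f j) := svalP (ClassicalEpsilon.constructive_indefinite_description _ (H j)).
case: (boolP (injectiveb f)) => [/injectiveP Hi|/injectivePn [j [j' Hne Heq]]].
  by have := leq_card f Hi; rewrite !card_ord ltnn.
case: (ltngtP j j') => Hlt.
- exists j, j', (f j); split => //; split => //. rewrite Heq. exact: Hf.
- exists j', j, (f j); split => //; split; last exact: Hf. rewrite Heq. exact: Hf.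
- by move: Hne; rewrite (val_inj Hlt) eqxx.
Qed.

Section Main.
Variables (Sigma Gamma : finType).
Variable T : transducer Sigma Gamma.
Variables (q1 q2 i0 t : state T) (u v x y : seq Sigma) (u1 u2 v1 v2 al be : seq Gamma).
Hypotheses (Hi : i0 \in init T) (Hx : run i0 x al q1) (Hu1 : run q1 u u1 q1)
  (Hv1 : run q1 v v1 q1) (Hu2 : run q1 u u2 q2) (Hv2 : run q2 v v2 q2)
  (Hy : run q2 y be t) (Ht : t \in final T).

Definition inw (c : nat -> nat) a m := flatten [seq u ++ vpow (c i) v | i <- iota a m].
Definition outw (c : nat -> nat) a m := flatten [seq u1 ++ vpow (c i) v1 | i <- iota a m].
Definition gam := be ++ fout t.
Definition Wpre c j := x ++ inw c 0 j.+1.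
Definition W c j := Wpre c j ++ y.
Definition O c j := al ++ outw c 0 j ++ ((u2 ++ vpow (c j) v2) ++ gam).
Definition zc c j d := inw c j.+1 d.+1 ++ y.
Definition E c j d := outw c j.+1 d ++ ((u2 ++ vpow (c (j.+1 + d)) v2) ++ gam).

Lemma inwD c a m1 m2 : inw c a (m1 + m2) = inw c a m1 ++ inw c (a + m1) m2.
Proof. by rewrite /inw iotaD map_cat flatten_cat. Qed.
Lemma outwD c a m1 m2 : outw c a (m1 + m2) = outw c a m1 ++ outw c (a + m1) m2.
Proof. by rewrite /outw iotaD map_cat flatten_cat. Qed.
Lemma inw1 c a : inw c a 1 = u ++ vpow (c a) v.
Proof. by rewrite /inw /= cats0. Qed.
Lemma outw1 c a : outw c a 1 = u1 ++ vpow (c a) v1.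
Proof. by rewrite /outw /= cats0. Qed.

Lemma run_inw c a m : run q1 (inw c a m) (outw c a m) q1.
Proof.
elim: m a => [|m IH] a; first by constructor.
rewrite -addn1 addnC inwD outwD inw1 outw1.
apply: run_cat; last exact: IH.
apply: run_cat Hu1 _. exact: run_vpow.
Qed.

Lemma semO c j : sem T (W c j) (O c j).
Proof.
exists i0, t, ((al ++ (outw c 0 j ++ (u2 ++ vpow (c j) v2))) ++ be); split => //.
  rewrite /W /Wpre -addn1 inwD inw1 add0n.
  apply: run_cat Hy.
  apply: run_cat Hx _. apply: run_cat (run_inw _ _ _) _. apply: run_cat Hu2 _. exact: run_vpow.
by rewrite /O /gam !catA.
Qed.

Lemma W_split c j d : W c (j.+1 + d) = Wpre c j ++ zc c j d.
Proof. by rewrite /W /Wpre /zc -addnS inwD add0n !catA. Qed.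

Lemma O_split c j d : O c (j.+1 + d) = (al ++ outw c 0 j) ++ ((u1 ++ vpow (c j) v1) ++ E c j d).
Proof. by rewrite /O /E -addn1 outwD outwD outw1 add0n addn1 -!catA. Qed.

Lemma O_splitj c j : O c j = (al ++ outw c 0 j) ++ ((u2 ++ vpow (c j) v2) ++ gam).
Proof. by rewrite /O catA. Qed.

Lemma inw_eq c1 c2 a m : (forall i, a <= i < a + m -> c1 i = c2 i) -> inw c1 a m = inw c2 a m.
Proof.
move=> H; rewrite /inw; congr flatten; apply/eq_in_map => i; rewrite mem_iota => /H ->. by [].
Qed.
Lemma outw_eq c1 c2 a m : (forall i, a <= i < a + m -> c1 i = c2 i) -> outw c1 a m = outw c2 a m.
Proof.
move=> H; rewrite /outw; congr flatten; apply/eq_in_map => i; rewrite mem_iota => /H ->. by [].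
Qed.


Lemma init1 (Tr : transducer Sigma Gamma) (Hs : sequential Tr) (a b : state Tr) :
  a \in init Tr -> b \in init Tr -> a = b.
Proof.
move: Hs.1 => /eqP/cards1P [z Hz]; rewrite Hz !inE => /eqP -> /eqP ->. by [].
Qed.

Lemma period_exists : multi_sequential (sem T) ->
  exists c c', c < c' /\ Delta (u1 ++ vpow c v1) (u2 ++ vpow c v2) =
                         Delta (u1 ++ vpow c' v1) (u2 ++ vpow c' v2).
Proof.
case=> n [Rs [Hseq Heq]].
have Hch k : {T' : transducer Sigma Gamma | sequential T' /\ forall a b, Rs k a b <-> sem T' a b}
  := ClassicalEpsilon.constructive_indefinite_description _ (Hseq k).
pose Tk k := sval (Hch k).
have HTk k : sequential (Tk k) /\ (forall a b, Rs k a b <-> sem (Tk k) a b) := svalP (Hch k).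
apply: Classical_Prop.NNPP => Hno.
pose Dl c := Delta (u1 ++ vpow c v1) (u2 ++ vpow c v2).
have Hdist a b : Dl a = Dl b -> a = b.
  move=> Hab; case: (ltngtP a b) => // Hlt; exfalso; apply: Hno.
  - by exists a, b.
  - by exists b, a.
pose N := n.+1.
pose S := #|{: {k : 'I_n & state (Tk k)}}|.
pose M := N * N * S + 1.
pose cof (cs : {ffun 'I_N -> 'I_M}) (i : nat) : nat := cs (inord i).
pose outfrom k (s : state (Tk k)) z X :=
  exists w t', [/\ run s z w t', t' \in final (Tk k) & X = w ++ fout t'].
have outfrom_uniq k s z X X' : outfrom k s z X -> outfrom k s z X' -> X = X'.
  move=> [w [t1 [H1 _ ->]]] [w' [t2 [H2 _ ->]]].
  by have [-> ->] := run_det (HTk k).1 H1 H2.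
pose Good (cs : {ffun 'I_N -> 'I_M}) (j j' : 'I_N) k (s : state (Tk k)) := exists i1 o X1 X2,
   [/\ i1 \in init (Tk k), run i1 (Wpre (cof cs) j) o s, outfrom k s y X1,
       outfrom k s (zc (cof cs) j (j' - j.+1)) X2 & O (cof cs) j = o ++ X1
     /\ O (cof cs) j' = o ++ X2].
pose D := ('I_N * 'I_N * {k : 'I_n & state (Tk k)} * {ffun 'I_n -> 'I_M})%type.
pose Pd (cs : {ffun 'I_N -> 'I_M}) (d : D) := d.1.1.1 < d.1.1.2 /\ (forall i, d.2 i = cs (lift d.1.1.1 i)) /\
   Good cs d.1.1.1 d.1.1.2 (tag d.1.2) (tagged d.1.2).
have Hex (cs : {ffun 'I_N -> 'I_M}) : exists d, Pd cs d.
  have Hk j : exists k, Rs k (W (cof cs) j) (O (cof cs) j) := (Heq _ _).1 (semO _ _).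
  have [j [j' [k [Hjj' [H1 H2]]]]] := pigeon Hk.
  have [Hsq HR] := HTk k.
  move/HR: H1 => [i1 [t1 [w1 [Hi1 Ht1 Hr1 Ho1]]]].
  move/HR: H2 => [i2 [t2 [w2 [Hi2 Ht2 Hr2 Ho2]]]].
  rewrite /W in Hr1. have [o [X1 [s [Hp1 Hs1 Ew1]]]] := run_split Hr1.
  have Ej' : (j' : nat) = j.+1 + (j' - j.+1) by rewrite subnKC.
  have HW := W_split (cof cs) j (j' - j.+1). rewrite -Ej' in HW. rewrite HW in Hr2.
  have [o' [X2 [s' [Hp2 Hs2 Ew2]]]] := run_split Hr2.
  have Hii : i2 = i1 := init1 Hsq Hi2 Hi1.
  rewrite Hii in Hp2.
  have [Eo Es] := run_det Hsq Hp1 Hp2.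
  rewrite -Eo -Es in Hs2 Ew2.
  exists (j, j', Tagged (fun k => state (Tk k)) s, [ffun i => cs (lift j i)]).
  split => //=. split => [i|]; first by rewrite ffunE.
  exists i1, o, (X1 ++ fout t1), (X2 ++ fout t2). split => //.
  - by exists X1, t1.
  - by exists X2, t2.
  - by rewrite Ho1 Ew1 catA; split => //; rewrite Ho2 Ew2 catA.
pose Phi (cs : {ffun 'I_N -> 'I_M}) : D := sval (ClassicalEpsilon.constructive_indefinite_description _ (Hex cs)).
have HPhi (cs : {ffun 'I_N -> 'I_M}) : Pd cs (Phi cs) := svalP (ClassicalEpsilon.constructive_indefinite_description _ (Hex cs)).
have Hinj : injective Phi.
  move=> cs1 cs2 HE.
  have P1 := HPhi cs1; have P2 := HPhi cs2; rewrite HE in P1.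
  move: (Phi cs2) P1 P2 => [[[j j'] [k s]] g] /= [Hjj' [Hg1 G1]] [_ [Hg2 G2]].
  have Hoff i : i != j -> cs1 i = cs2 i.
    case: (unliftP j i) => [i' ->|->]; last by rewrite eqxx.
    by rewrite -Hg1 Hg2.
  have Hc i : j < i <= j' -> cof cs1 i = cof cs2 i.
    move=> /andP [H1 H2]; rewrite /cof (Hoff (@inord n i)) //.
    have HiN : i < N by apply: leq_ltn_trans H2 (ltn_ord _).
    by rewrite -val_eqE /= inordK // neq_ltn H1 orbT.
  set d := j' - j.+1.
  have Ej' : (j' : nat) = j.+1 + d by rewrite subnKC.
  have Hz : zc (cof cs1) j d = zc (cof cs2) j d.
    rewrite /zc (@inw_eq (cof cs1) (cof cs2)) // => i /andP [H1 H2]; apply: Hc.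
    by rewrite H1 Ej' -ltnS -addnS H2.
  have HE' : E (cof cs1) j d = E (cof cs2) j d.
    rewrite /E (@outw_eq (cof cs1) (cof cs2)) => [|i /andP [H1 H2]].
      by rewrite -Ej' Hc // Hjj' leqnn.
    apply: Hc. rewrite H1 Ej' /=. exact: ltnW.
  move: G1 G2 => [i1 [o1 [X1 [X2 [_ _ HX1 HX2 [Ho1 Ho2]]]]]] [i2 [o2 [X1' [X2' [_ _ HX1' HX2' [Ho1' Ho2']]]]]].
  rewrite -/d Hz in HX2. rewrite -/d in HX2'.
  rewrite (outfrom_uniq _ _ _ _ _ HX1' HX1) in Ho1'.
  rewrite (outfrom_uniq _ _ _ _ _ HX2' HX2) in Ho2'.
  have K c0 o0 (Hj : O c0 j = o0 ++ X1) (Hj' : O c0 j' = o0 ++ X2) :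
      Delta ((u1 ++ vpow (c0 j) v1) ++ E c0 j d) ((u2 ++ vpow (c0 j) v2) ++ gam) = Delta X2 X1.
    have Hs2 := O_split c0 j d; rewrite -Ej' Hj' in Hs2.
    have Hs1 := O_splitj c0 j; rewrite Hj in Hs1.
    by rewrite -(Delta_lcancel (al ++ outw c0 0 j)) -Hs2 -Hs1 Delta_lcancel.
  have K1 := K _ _ Ho1 Ho2. have K2 := K _ _ Ho1' Ho2'.
  rewrite HE' -K2 in K1.
  have Hcj : cof cs1 j = cof cs2 j by apply: Hdist; exact: Delta_rcancel K1.
  move: Hcj; rewrite /cof inord_val => /val_inj Hcj.
  apply/ffunP => i; case: (eqVneq i j) => [->|]; [exact Hcj|exact: Hoff].
have := leq_card Phi Hinj.
rewrite card_ffun !card_prod !card_ffun !card_ord -/S.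
rewrite leqNgt => /negP; apply.
rewrite /N expnS -/N ltn_pmul2r; first by rewrite /M addn1. by rewrite expn_gt0 /M addn1.
Qed.

End Main.

Theorem lemma3 (Sigma Gamma : finType) (T : transducer Sigma Gamma) :
  trim T -> multi_sequential (sem T) -> weak_twinning T.
Proof.
move=> Htrim HM q1 q2 u v u1 u2 v1 v2 Hu1 Hv1 Hu2 Hv2.
have [i0 [ta [x [al [z1 [z2 [Hi _ Hx _]]]]]]] := Htrim q1.
have [ib [t [yy [bb [y [be [_ Ht _ Hy]]]]]]] := Htrim q2.
have [c [c' [Hlt HD]]] := period_exists Hi Hx Hu1 Hv1 Hu2 Hv2 Hy Ht HM.
exact: twin_of_period Hlt HD.
Qed.
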